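(* For every $k\in\mathbb{N}$ there exists a nondeterministic parity automaton $\mathcal{A}$ with $O(k)$ states such that, for every bound $n\ge|\mathcal{A}|$ (the number of states of $\mathcal{A}$), every deterministic parity automaton $\mathcal{A}'$ with $L(\mathcal{A}')\subseteq L(\mathcal{A})$ and $L_n(L(\mathcal{A}'))=L_n(L(\mathcal{A}))$ has at least $2^k$ states.
   Context: A lasso of length $n$ over a finite alphabet $\Sigma$ is a pair $(u,v)$ with $u\in\Sigma^*$, $v\in\Sigma^+$, $|u\cdot v|=n$, inducing $u\cdot v^\omega$. For $\psi\subseteq\Sigma^\omega$, $L_n(\psi)=\{u\cdot v^\omega \in \psi \mid u\in\Sigma^*, v\in\Sigma^+, |u\cdot v|=n\}$. A nondeterministic parity automaton is $(Q,Q_0,\delta,\mu)$ with finite $Q$, $Q_0\subseteq Q$, $\delta:Q\times\Sigma\to\mathcal{P}(Q)$, coloring $\mu:Q\to C$, $C\subset\mathbb{N}$ finite. A run on $\alpha_1\alpha_2\cdots$ is $q_0q_1\cdots$ with $q_0\in Q_0$ and $q_{i+1}\in\delta(q_i,\alpha_{i+1})$; it is accepting if the highest color occurring infinitely often along it is even; $L(\cdot)$ is the set of words with an accepting run. Deterministic means $|Q_0|=1$ and $|\delta(q,\alpha)|\le1$ for all $q,\alpha$ (missing successors allowed). *)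

(* Defs.v *)
From mathcomp Require Import all_boot.
Set Implicit Arguments. Unset Strict Implicit. Unset Printing Implicit Defensive.

Definition oword (S : Type) := nat -> S.
Definition olang (S : Type) := oword S -> Prop.

Record NPA (S : finType) := mkNPA {
  state : finType;
  init : {set state};
  delta : state -> S -> {set state};
  color : state -> nat
}.

Definition num_states (S : finType) (A : NPA S) : nat := #|@state S A|.

(* run q0 q1 ... on alpha_1 alpha_2 ... (here w 0 = alpha_1) *)
Definition is_run (S : finType) (A : NPA S) (w : oword S) (r : nat -> state A) :=
  r 0 \in @init S A /\ forall i, r i.+1 \in @delta S A (r i) (w i).

Definition inf_often_color (S : finType) (A : NPA S) (r : nat -> state A) (c : nat) :=
  forall N, exists i, N <= i /\ @color S A (r i) = c.

Definition accepting (S : finType) (A : NPA S) (r : nat -> state A) :=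
  exists c, [/\ ~~ odd c, @inf_often_color S A r c &
                forall c', @inf_often_color S A r c' -> c' <= c].

Definition lang (S : finType) (A : NPA S) : olang S :=
  fun w => exists r, @is_run S A w r /\ @accepting S A r.

Definition deterministic (S : finType) (A : NPA S) :=
  #|@init S A| = 1 /\ forall q a, #|@delta S A q a| <= 1.

(* the word u . v^omega, where v = a :: v' is nonempty *)
Definition lasso_word (S : Type) (u : seq S) (a : S) (v' : seq S) : oword S :=
  fun i => if i < size u then nth a u i
           else nth a (a :: v') ((i - size u) %% size (a :: v')).

Definition Ln (S : Type) (n : nat) (psi : olang S) : olang S :=
  fun w => psi w /\ exists (u : seq S) (a : S) (v' : seq S),
     size u + size (a :: v') = n /\ forall i, w i = lasso_word u a v' i.

(* Main.v *)
Require Import Defs.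
From mathcomp Require Import all_boot.
From mathcomp Require Import zify.
Set Implicit Arguments.

Section Constr.
Variable k : nat.

Definition Sig : finType := ({set 'I_k} + option 'I_k)%type.
Definition Qs : finType := (bool + option 'I_k)%type.

Definition allowed (X : {set 'I_k}) (g : option 'I_k) : bool :=
  if g is Some i then i \in X else true.

Definition step (q : Qs) (a : Sig) (q' : Qs) : bool :=
  match q, a, q' with
  | inl false, inl X, inr g => allowed X g
  | inr g, inr b, inl true => g == b
  | inl true, _, inl true => true
  | _, _, _ => false
  end.

Definition Aut : NPA Sig :=
  @mkNPA Sig Qs [set inl false] (fun q a => [set q' | step q a q']) (fun _ => 0).

Definition wrd (X : {set 'I_k}) (b : option 'I_k) : oword Sig :=
  fun i => if i == 0 then inl X else if i == 1 then inr b else inr None.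

Lemma Aut_card : num_states Aut = k + 3.
Proof.
rewrite /num_states /= card_sum card_bool card_option card_ord; lia.
Qed.

Lemma wrd_lang X b : allowed X b -> lang Aut (wrd X b).
Proof.
move=> Hb.
exists (fun i => if i == 0 then inl false else if i == 1 then inr b else inl true : Qs).
split.
  split; first by rewrite /= inE.
  case=> [|[|i]]; rewrite /= inE /wrd //=.
exists 0; split => //.
  move=> N; exists N; split => //.
move=> c' /(_ 0) [i [_ <-]] //.
Qed.

Lemma wrd_notlang Y j : lang Aut (wrd Y (Some j)) -> j \in Y.
Proof.
move=> [r [[H0 Hr] _]].
have H1 := Hr 0. have H2 := Hr 1.
move: H0 H1 H2; rewrite /= !inE /wrd /=.
move/eqP=> ->.
case: (r 1) => [[]|g] //=.
case: (r 2) => [[]|g'] //=.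
by move=> Hg /eqP Hgj; move: Hg; rewrite Hgj.
Qed.

Lemma wrd_lasso n X b : 3 <= n ->
  exists (u : seq Sig) (a : Sig) (v' : seq Sig),
     size u + size (a :: v') = n /\ forall i, wrd X b i = lasso_word u a v' i.
Proof.
move=> Hn.
exists (inl X :: inr b :: nseq (n - 3) (inr None)), (inr None), [::].
split; first by rewrite /= size_nseq; lia.
case=> [|[|i]] //.
rewrite /lasso_word /wrd /=.
case: ifP => _; first by rewrite nth_nseq if_same.
by rewrite modn1.
Qed.

End Constr.

Lemma card_le1_eq (T : finType) (D : {set T}) x y :
  #|D| <= 1 -> x \in D -> y \in D -> x = y.
Proof. move=> /card_le1_eqP H Hx Hy; exact: H. Qed.

Theorem theorem7 :
  exists c : nat, forall k : nat,
    exists (S : finType) (A : NPA S),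
      num_states A <= c * k + c /\
      forall n : nat, num_states A <= n ->
        forall A' : NPA S, deterministic A' ->
          (forall w, lang A' w -> lang A w) ->
          (forall w, Ln n (lang A') w <-> Ln n (lang A) w) ->
          2 ^ k <= num_states A'.
Proof.
exists 3 => k.
exists (Sig k), (Aut k).
rewrite Aut_card; split; first lia.
move=> n Hn A' [Hinit Hdet] Hsub Heq.
have Hn3 : 3 <= n by lia.
have /cards1P [q0 Hq0] : #|@init _ A'| == 1 by rewrite Hinit.
have HA' : forall (X : {set 'I_k}) b, allowed X b -> lang A' (wrd X b).
  move=> X b Hb.
  have : Ln n (lang (Aut k)) (wrd X b) by split; [exact: wrd_lang | exact: wrd_lasso].
  by move/Heq => [].
pose F := fun X : {set 'I_k} => odflt q0 [pick s in @delta _ A' q0 (inl X)].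
have FP : forall X q, q \in @delta _ A' q0 (inl X) -> F X = q.
  move=> X q Hq; rewrite /F; case: pickP => [s Hs|/(_ q)] /=.
    exact: (card_le1_eq (Hdet _ _) Hs Hq).
  by rewrite Hq.
have Fin : forall X, F X \in @delta _ A' q0 (inl X).
  move=> X; have [r [[H0 Hr] _]] := HA' X None isT.
  move: H0; rewrite Hq0 inE => /eqP H0.
  have := Hr 0; rewrite H0 => H1.
  by rewrite (FP _ _ H1).
have H : forall X Y j, F X = F Y -> j \in X -> j \in Y.
  move=> X Y j HF Hj.
  have [r [[H0 Hr] Hacc]] := HA' X (Some j) Hj.
  move: H0; rewrite Hq0 inE => /eqP H0.
  have H1 := Hr 0; rewrite H0 in H1.
  have E1 := FP _ _ H1.
  apply: wrd_notlang; apply: Hsub.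
  exists (fun i => if i == 0 then q0 else r i); split.
    split; first by rewrite Hq0 inE.
    case=> [|i] /=.
      by rewrite -E1 HF; apply: Fin.
    by have := Hr i.+1.
  case: Hacc => c [Hc Hinf Hmax].
  have EQ : forall c0, inf_often_color r c0 <->
      inf_often_color (fun i => if i == 0 then q0 else r i) c0.
    move=> c0; split=> Hi N; have [i [Hi1 Hi2]] := Hi N.+1;
      exists i; split; try lia; case: i Hi1 Hi2 => //.
  exists c; split => //; first by apply/EQ.
  by move=> c' /EQ; apply: Hmax.
have Finj : injective F.
  move=> X Y HF; apply/setP => j; apply/idP/idP; apply: H => //.
have := leq_card _ Finj.
by rewrite /num_states -cardsT -powersetT card_powerset cardsT card_ord.
Qed.
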